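(* In the polarized setting below, for $t\in H^0$ let $D(t):V_w\to V_w$ be multiplication by $t$, and for $0\le p\le w-1$ write $D(t)|_{H^p}=D^-_p(t)+D^0_p(t)+D^+_p(t)$ with $D^-_p(t)\in\mathrm{Hom}(H^p,H^{p-1})$, $D^0_p(t)\in\mathrm{Hom}(H^p,H^p)$, $D^+_p(t)\in\mathrm{Hom}(H^p,H^{p+1})$ (where $D^-_0(t)=0$, $D^+_{w-1}(t)=0$); set $D^{\pm}(t)=\sum_pD^{\pm}_p(t)$, $D^0(t)=\sum_pD^0_p(t)$ as endomorphisms of $V_w$. Then $D(t)=D^-(t)+D^0(t)+D^+(t)$ on $V_w$, $D^0(t)$ preserves the grading $V_w=\bigoplus_{p=0}^{w-1}H^p$ and $D^{\pm}(t)$ shift it by $\pm1$, and for all $t,t'\in H^0$: (i) $D^+(t)D^+(t')=D^+(t')D^+(t)$ and $D^-(t)D^-(t')=D^-(t')D^-(t)$; (ii) $D^0(t)D^{\pm}(t')+D^{\pm}(t)D^0(t')=D^0(t')D^{\pm}(t)+D^{\pm}(t')D^0(t)$; (iii) $D^0(t)D^0(t')-D^0(t')D^0(t)+D^+(t)D^-(t')-D^+(t')D^-(t)+D^-(t)D^+(t')-D^-(t')D^+(t)=0$. (Equivalently, writing $D,D^0,D^{\pm}:V_w\to (H^0)^*\otimes V_w$: $D\wedge D=0$, $D^{\pm}\wedge D^{\pm}=0$, $D^0\wedge D^{\pm}+D^{\pm}\wedge D^0=0$, $D^0\wedge D^0+D^+\wedge D^-+D^-\wedge D^+=0$.)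
   Context: Polarized setting. Let $X$ be a smooth complex projective variety of dimension $n\ge2$ with canonical divisor $K_X$, $\mathcal E$ a rank $n$ holomorphic vector bundle with $\mathcal O_X(L)=\det\mathcal E$ and $H^i(\mathcal O_X(-L))=0$ for $i\le n-1$. Let $e\in H^0(\mathcal E)$ be a section whose zero scheme $Z=Z_e$ is a finite set of $d$ distinct reduced points. Put $A=H^0(\mathcal O_Z)$ and $E_Z=\mathrm{Ext}^{n-1}(\mathcal I_Z(L),\mathcal O_X)$, viewed via Serre duality $E_Z\cong H^1(\mathcal I_Z(L+K_X))^*$ and dualizing the surjection $H^0(\mathcal O_Z(L+K_X))\to H^1(\mathcal I_Z(L+K_X))$ as a subspace of $H^0(\mathcal O_Z(L+K_X))^*\cong H^0(\omega_Z\otimes\mathcal O_X(-L-K_X))$, sections of an invertible sheaf on $Z$. An element $\alpha\in E_Z$ is regular if $f\mapsto f\alpha$ is an isomorphism $A\to H^0(\mathcal O_Z(L+K_X))^*$ (i.e. $\alpha$ vanishes at no point of $Z$). For regular $\alpha$ put $V_1=\{\beta/\alpha:\beta\in E_Z\}\subset A$ (it contains $1$), let $V_k$ be the span of all products of $k$ elements of $V_1$ (so $V_1\subset V_2\subset\cdots$), $V_0=0$, and let $w\ge1$ be the least integer with $V_k=V_w$ for all $k\ge w$. Let $q(f,g)=\sum_{z\in Z}f(z)g(z)$ be the trace form on $A$; $\alpha$ is polarizing if it is regular and $q|_{V_k}$ is non-degenerate for all $k\ge1$. For polarizing $\alpha$ define $H^p=V_p^{\perp}\cap V_{p+1}$ for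 $0\le p\le w-1$ and $H^w=V_w^{\perp}$, orthogonal complements taken in $A$ with respect to $q$. Then $A=\bigoplus_{p=0}^wH^p$, $H^0=V_1$ and $V_w=\bigoplus_{p=0}^{w-1}H^p$. *)

(* Defs.v *)
(* The finite set Z of d reduced points is 'I_d; the algebra
   A = H^0(O_Z) of functions Z -> F is modelled by row vectors 'rV[F]_d with
   pointwise product; subspaces of A are row spaces of matrices (%MS). *)
From HB Require Import structures.
From mathcomp Require Import all_boot all_order all_algebra.
Set Implicit Arguments. Unset Strict Implicit. Unset Printing Implicit Defensive.
Import Order.TTheory GRing.Theory Num.Theory.
Local Open Scope ring_scope.

Section Polarized.
Variables (F : fieldType) (d : nat).

Definition pmul (f g : 'rV[F]_d) : 'rV[F]_d := \row_i (f 0 i * g 0 i).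

Definition oneZ : 'rV[F]_d := const_mx 1.

Definition qform (f g : 'rV[F]_d) : F := \sum_(i < d) f 0 i * g 0 i.

Definition prodsp (U W : 'M[F]_d) : 'M[F]_d :=
  (\sum_(i < d) \sum_(j < d) <<pmul (row i U) (row j W)>>)%MS.

Definition Vk (V1 : 'M[F]_d) (k : nat) : 'M[F]_d :=
  match k with
  | 0 => 0
  | k'.+1 => iter k' (fun U => prodsp U V1) V1
  end.

Definition nondeg (U : 'M[F]_d) : Prop :=
  forall f : 'rV[F]_d, (f <= U)%MS ->
    (forall g : 'rV[F]_d, (g <= U)%MS -> qform f g = 0) -> f = 0.

Definition perp (U : 'M[F]_d) : 'M[F]_d := kermx U^T.

Definition Hp (V1 : 'M[F]_d) (w p : nat) : 'M[F]_d :=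
  if (p < w)%N then (perp (Vk V1 p) :&: Vk V1 p.+1)%MS else perp (Vk V1 w).

Definition projH (V1 : 'M[F]_d) (w p : nat) (v : 'rV[F]_d) : 'rV[F]_d :=
  v *m proj_mx (Hp V1 w p) (\sum_(j < w.+1 | (j != p :> nat)) Hp V1 w j)%MS.

Definition Dmul (t v : 'rV[F]_d) : 'rV[F]_d := pmul t v.

Definition Dminus (V1 : 'M[F]_d) (w : nat) (t v : 'rV[F]_d) : 'rV[F]_d :=
  \sum_(p < w | (0 < p)%N) projH V1 w p.-1 (Dmul t (projH V1 w p v)).

Definition Dzero (V1 : 'M[F]_d) (w : nat) (t v : 'rV[F]_d) : 'rV[F]_d :=
  \sum_(p < w) projH V1 w p (Dmul t (projH V1 w p v)).

Definition Dplus (V1 : 'M[F]_d) (w : nat) (t v : 'rV[F]_d) : 'rV[F]_d :=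
  \sum_(p < w | (p.+1 < w)%N) projH V1 w p.+1 (Dmul t (projH V1 w p v)).

End Polarized.

(* Main.v *)
Require Import Defs.
From HB Require Import structures.
From mathcomp Require Import all_boot all_order all_algebra.
From mathcomp Require Import zify ring.
Import GRing.Theory.
Local Open Scope ring_scope.
Set Implicit Arguments. Unset Strict Implicit. Unset Printing Implicit Defensive.

Section Basic.
Variables (F : fieldType) (d : nat).
Local Notation pp A := (kermx (trmx A)).

Lemma pmul_mx (f g : 'rV[F]_d) : pmul f g = g *m diag_mx f.
Proof. by apply/rowP => i; rewrite mul_mx_diag !mxE mulrC. Qed.

Lemma pmulC (f g : 'rV[F]_d) : pmul f g = pmul g f.
Proof. by apply/rowP => i; rewrite !mxE mulrC. Qed.

Lemma pmul_suml n (f : 'I_n -> 'rV[F]_d) g :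
  pmul (\sum_i f i) g = \sum_i pmul (f i) g.
Proof.
apply/rowP => k; rewrite !mxE !summxE big_distrl /=.
by apply: eq_bigr => i _; rewrite !mxE.
Qed.

Lemma pmul_scalel c (f g : 'rV[F]_d) : pmul (c *: f) g = c *: pmul f g.
Proof. by apply/rowP => k; rewrite !mxE mulrA. Qed.

Lemma prodsp_sub (U W : 'M[F]_d) u v :
  (u <= U)%MS -> (v <= W)%MS -> (pmul u v <= prodsp U W)%MS.
Proof.
case/submxP => a ->; case/submxP => b ->.
rewrite !mulmx_sum_row pmul_suml; apply: summx_sub => i _.
rewrite pmul_scalel; apply: scalemx_sub.
rewrite pmulC pmul_suml; apply: summx_sub => j _.
rewrite pmul_scalel; apply: scalemx_sub; rewrite pmulC.
apply: (sumsmx_sup i) => //; apply: (sumsmx_sup j) => //.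
by rewrite genmxE.
Qed.

Lemma qformE (f g : 'rV[F]_d) : qform f g = (f *m g^T) 0 0.
Proof. by rewrite /qform !mxE; apply: eq_bigr => i _; rewrite !mxE. Qed.

Lemma ppE m n (A : 'M[F]_(m, d)) (B : 'M[F]_(n, d)) :
  (A <= pp B)%MS = (A *m B^T == 0).
Proof. by apply/sub_kermxP/eqP. Qed.

Lemma pp_sym m n (A : 'M[F]_(m, d)) (B : 'M[F]_(n, d)) :
  (A <= pp B)%MS = (B <= pp A)%MS.
Proof.
rewrite !ppE; apply/eqP/eqP => h.
  by rewrite -[B](trmxK) -trmx_mul h trmx0.
by rewrite -[A](trmxK) -trmx_mul h trmx0.
Qed.

Lemma pp_S m n m' n' (A : 'M[F]_(m, d)) (B : 'M[F]_(n, d))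
  (A' : 'M[F]_(m', d)) (B' : 'M[F]_(n', d)) :
  (A' <= A)%MS -> (B' <= B)%MS -> (A <= pp B)%MS -> (A' <= pp B')%MS.
Proof.
case/submxP => X ->; case/submxP => Y ->; rewrite !ppE => /eqP h.
by rewrite trmx_mul -mulmxA (mulmxA A) h mul0mx mulmx0.
Qed.

Lemma pp_sum m (A : 'M[F]_(m, d)) n (P : pred 'I_n) (B : 'I_n -> 'M[F]_d) :
  (forall i, P i -> A <= pp (B i))%MS -> (A <= pp (\sum_(i | P i) B i)%MS)%MS.
Proof.
move=> h; rewrite pp_sym; apply/sumsmx_subP => i Pi; rewrite pp_sym; exact: h.
Qed.

Lemma pp_full m (A : 'M[F]_(m, d)) : (A <= pp (1%:M : 'M[F]_d))%MS -> A = 0.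
Proof. by rewrite ppE trmx1 mulmx1 => /eqP. Qed.

Lemma nondeg_cap (U : 'M[F]_d) : nondeg U -> (U :&: pp U <= (0:'M[F]_d))%MS.
Proof.
move=> hnd; apply/row_subP => i; rewrite submx0; apply/eqP.
have hU : (row i (U :&: pp U) <= U)%MS by apply: submx_trans (row_sub _ _) (capmxSl _ _).
have hp : (row i (U :&: pp U) <= pp U)%MS by apply: submx_trans (row_sub _ _) (capmxSr _ _).
apply: hnd => // g hg; rewrite qformE.
have := pp_S (submx_refl _) hg hp; rewrite ppE => /eqP ->; by rewrite mxE.
Qed.

Lemma nondeg_split (U W : 'M[F]_d) : nondeg U -> (U <= W)%MS ->
  (W <= U + (pp U :&: W))%MS.
Proof.
move=> hnd sUW; have e := matrix_modl (pp U) sUW.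
rewrite e sub_capmx submx_refl andbT; apply: submx_full.
rewrite /row_full; apply/eqP.
have := mxrank_sum_cap U (pp U).
have /eqP -> : (U :&: pp U)%MS == 0 by rewrite -submx0 nondeg_cap.
rewrite mxrank0 addn0 mxrank_ker mxrank_tr => ->.
by rewrite subnKC // rank_leq_col.
Qed.

End Basic.

Section Main.
Variables (F : fieldType) (d : nat) (V1 : 'M[F]_d) (w : nat).
Hypothesis h1 : (oneZ F d <= V1)%MS.
Hypothesis hpol : forall k, (1 <= k)%N -> nondeg (Vk V1 k).
Hypothesis hw1 : (1 <= w)%N.
Hypothesis hstab : forall k, (w <= k)%N -> (Vk V1 k == Vk V1 w)%MS.

Local Notation pp A := (kermx (trmx A)).
Local Notation V k := (Vk V1 k).
Local Notation H p := (Hp V1 w p).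
Local Notation S p := (\sum_(j < w.+1 | (j != p :> nat)) Hp V1 w j)%MS.
Definition PM0 p := proj_mx (H p) (S p).
Fact PM_key : unit. Proof. exact: tt. Qed.
Definition PM := locked_with PM_key PM0.
Lemma PME p : PM p = proj_mx (H p) (S p). Proof. by rewrite /PM unlock. Qed.

Lemma Vk_S k : (0 < k)%N -> V k.+1 = prodsp (V k) V1.
Proof. by case: k. Qed.

Lemma mulV k m (A : 'M[F]_(m, d)) t : (A <= V k)%MS -> (t <= V1)%MS ->
  (A *m diag_mx t <= V k.+1)%MS.
Proof.
case: k => [|k] hA ht.
  by move: hA; rewrite /= submx0 => /eqP ->; rewrite mul0mx sub0mx.
apply/row_subP => i; rewrite row_mul -pmul_mx pmulC Vk_S //.
apply: prodsp_sub => //; exact: submx_trans (row_sub i A) hA.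
Qed.

Lemma Vmono k : (V k <= V k.+1)%MS.
Proof.
case: k => [|k]; first by rewrite sub0mx.
apply/row_subP => i; rewrite (@Vk_S k.+1) //.
have -> : row i (V k.+1) = pmul (row i (V k.+1)) (oneZ F d).
  by apply/rowP => j; rewrite !mxE mulr1.
by apply: prodsp_sub => //; apply: row_sub.
Qed.

Lemma Vle j k : (j <= k)%N -> (V j <= V k)%MS.
Proof.
elim: k => [|k IH]; first by rewrite leqn0 => /eqP ->.
rewrite leq_eqVlt => /orP [/eqP -> //| hjk].
exact: submx_trans (IH hjk) (@Vmono k).
Qed.

Lemma nondegV k : nondeg (V k).
Proof.
case: k => [|k]; last exact: hpol.
by move=> f; rewrite /= submx0 => /eqP.
Qed.

Lemma Hlt p : (p < w)%N -> H p = (pp (V p) :&: V p.+1)%MS.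
Proof. by move=> h; rewrite /Hp h. Qed.

Lemma Hge p : (w <= p)%N -> H p = pp (V w).
Proof. by move=> h; rewrite /Hp ltnNge h. Qed.

Lemma H_sub_V p : (p < w)%N -> (H p <= V p.+1)%MS.
Proof. by move=> h; rewrite Hlt // capmxSr. Qed.

Lemma H_pp p : (p <= w)%N -> (H p <= pp (V p))%MS.
Proof.
rewrite leq_eqVlt => /orP [/eqP ->|h]; first by rewrite Hge.
by rewrite Hlt // capmxSl.
Qed.

Lemma V_split p : (p < w)%N -> (V p.+1 <= V p + H p)%MS.
Proof. by move=> h; rewrite Hlt //; apply: nondeg_split (@nondegV p) (@Vmono p). Qed.

Lemma full_split : ((1%:M : 'M[F]_d) <= V w + H w)%MS.
Proof.
apply: submx_trans (nondeg_split (@nondegV w) (submx1 (V w))) _.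
by rewrite Hge // addsmxS // capmxSl.
Qed.

Lemma Vcover k : (k <= w)%N -> (V k <= \sum_(j < w.+1 | (j < k)%N) H j)%MS.
Proof.
elim: k => [|k IH] hk; first by rewrite sub0mx.
apply: submx_trans (V_split hk) _; rewrite addsmx_sub; apply/andP; split.
  apply: submx_trans (IH (ltnW hk)) _; apply/sumsmx_subP => j hj.
  by apply: (sumsmx_sup j) => //; apply: ltnW.
have hk' : (k < w.+1)%N by apply: ltnW.
by apply: (sumsmx_sup (Ordinal hk')) => /=.
Qed.

Lemma full_cover : ((1%:M : 'M[F]_d) <= \sum_(j < w.+1) H j)%MS.
Proof.
apply: submx_trans full_split _; rewrite addsmx_sub; apply/andP; split.
  apply: submx_trans (Vcover (leqnn w)) _; apply/sumsmx_subP => j _.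
  exact: (sumsmx_sup j).
exact: (sumsmx_sup ord_max).
Qed.

Lemma Hperp i j : (i <= w)%N -> (j <= w)%N -> i != j -> (H i <= pp (H j))%MS.
Proof.
wlog hij : i j / (i < j)%N.
  move=> hw hi hj hne; case: (ltngtP i j) => h.
  - exact: hw.
  - by rewrite pp_sym; apply: hw => //; rewrite eq_sym.
  - by rewrite h eqxx in hne.
move=> hi hj _; rewrite pp_sym.
apply: pp_S (submx_refl _) _ (H_pp hj).
apply: submx_trans (H_sub_V (leq_trans hij hj)) _; exact: Vle.
Qed.

Lemma S_pp p : (p <= w)%N -> (S p <= pp (H p))%MS.
Proof.
move=> hp; apply/sumsmx_subP => j hj; apply: Hperp => //.
by rewrite -ltnS.
Qed.

Lemma perp_all m (h : 'M[F]_(m, d)) :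
  (forall j, (j <= w)%N -> (h <= pp (H j))%MS) -> h = 0.
Proof.
move=> hj; apply: pp_full; apply: pp_S (submx_refl _) full_cover _.
by apply: pp_sum => j _; apply: hj; rewrite -ltnS.
Qed.

Lemma H_disj p : (p <= w)%N -> (H p :&: S p)%MS = 0.
Proof.
move=> hp; apply: perp_all => j hj.
case: (eqVneq j p) => [->|hne].
  apply: submx_trans (S_pp hp); exact: capmxSr.
apply: submx_trans (Hperp hp hj _); [exact: capmxSl | by rewrite eq_sym].
Qed.

Lemma HS_cover p : (p <= w)%N -> ((1%:M : 'M[F]_d) <= H p + S p)%MS.
Proof.
move=> hp; apply: submx_trans full_cover _; apply/sumsmx_subP => j _.
case: (eqVneq (j : nat) p) => [<-|hne]; first exact: addsmxSl.
apply: submx_trans (addsmxSr _ _); exact: (sumsmx_sup j).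
Qed.

Lemma P_sub p (v : 'rV[F]_d) : (v *m PM p <= H p)%MS.
Proof. rewrite PME; exact: proj_mx_sub. Qed.

Lemma P_id p (x : 'rV[F]_d) : (p <= w)%N -> (x <= H p)%MS -> x *m PM p = x.
Proof. by move=> hp hx; rewrite PME; apply: proj_mx_id => //; apply: H_disj. Qed.

Lemma P_0S p (x : 'rV[F]_d) : (p <= w)%N -> (x <= S p)%MS -> x *m PM p = 0.
Proof. by move=> hp hx; rewrite PME; apply: proj_mx_0 => //; apply: H_disj. Qed.

Lemma P_0 p j (x : 'rV[F]_d) : (p <= w)%N -> (j <= w)%N -> j != p ->
  (x <= H j)%MS -> x *m PM p = 0.
Proof.
move=> hp hj hne hx; apply: P_0S => //.
have hj' : (j < w.+1)%N by [].
by apply: (sumsmx_sup (Ordinal hj')).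
Qed.

Lemma P_compl p (v : 'rV[F]_d) : (p <= w)%N -> (v - v *m PM p <= S p)%MS.
Proof.
move=> hp; rewrite PME; apply: proj_mx_compl_sub.
exact: submx_trans (submx1 v) (HS_cover hp).
Qed.

Lemma decomp (v : 'rV[F]_d) : v = \sum_(p < w.+1) v *m PM p.
Proof.
have := submx_trans (submx1 v) full_cover => /sub_sumsmxP [u hu].
have e : forall p : 'I_w.+1, v *m PM p = u p *m H p.
  move=> p; have hp : (p <= w)%N := ltn_ord p.
  rewrite hu mulmx_suml (bigD1 p) //= P_id ?submxMl //.
  rewrite big1 ?addr0 // => j hj; apply: (@P_0 _ j) => //.
    exact: (ltn_ord j).
  exact: submxMl.
rewrite (eq_bigr _ (fun p _ => e p)); exact: hu.
Qed.

Lemma VS k p : (k <= p)%N -> (p <= w)%N -> (V k <= S p)%MS.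
Proof.
move=> hkp hpw; apply: submx_trans (Vcover (leq_trans hkp hpw)) _.
apply/sumsmx_subP => j hj; apply: (sumsmx_sup j) => //.
by rewrite neq_ltn (leq_trans hj hkp).
Qed.

Lemma decompV (v : 'rV[F]_d) : (v <= V w)%MS -> v = \sum_(p < w) v *m PM p.
Proof.
move=> hv; rewrite {1}(decomp v) big_ord_recr /= (@P_0S w) ?addr0 //.
exact: submx_trans hv (VS (leqnn w) (leqnn w)).
Qed.

Lemma y_V p (x : 'rV[F]_d) t : (p < w)%N -> (x <= H p)%MS -> (t <= V1)%MS ->
  (x *m diag_mx t <= V (minn p.+2 w))%MS.
Proof.
move=> hp hx ht; have hy := mulV (submx_trans hx (H_sub_V hp)) ht.
case: (leqP p.+2 w) => h //.
have e : p.+1 = w by apply/eqP; rewrite eqn_leq hp -ltnS h.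
move: hy; rewrite e => hy; apply: submx_trans hy _.
by have /andP [] := hstab (leqnSn w).
Qed.

Lemma van_hi p j (x : 'rV[F]_d) t : (p < w)%N -> (j <= w)%N ->
  (minn p.+2 w <= j)%N -> (x <= H p)%MS -> (t <= V1)%MS ->
  x *m diag_mx t *m PM j = 0.
Proof.
move=> hp hj hmin hx ht; apply: P_0S => //.
exact: submx_trans (y_V hp hx ht) (VS hmin hj).
Qed.

Lemma van_lo p j (x : 'rV[F]_d) t : (p < w)%N -> (j.+1 < p)%N ->
  (x <= H p)%MS -> (t <= V1)%MS -> x *m diag_mx t *m PM j = 0.
Proof.
move=> hp hjp hx ht; set y := x *m diag_mx t.
have hjw : (j <= w)%N by apply: ltnW; apply: ltn_trans hp; apply: ltn_trans hjp.
have hy : (y <= pp (H j))%MS.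
  rewrite ppE /y -mulmxA -tr_diag_mx -trmx_mul -ppE.
  apply: pp_S (submx_refl _) _ (submx_trans hx (H_pp (ltnW hp))).
  apply: submx_trans (mulV (H_sub_V (ltn_trans (ltnSn j) (ltn_trans hjp hp))) ht) _.
  exact: Vle.
apply: perp_all => i hi; case: (eqVneq i j) => [->|hne].
  have -> : y *m PM j = y - (y - y *m PM j) by rewrite opprB addrC subrK.
  rewrite addmx_sub // eqmx_opp; apply: submx_trans (P_compl _ hjw) (S_pp hjw).
apply: submx_trans (P_sub _ _) (Hperp hjw hi _); by rewrite eq_sym.
Qed.

Lemma Pgr i j (a : 'rV[F]_d) : (i <= w)%N -> (j <= w)%N -> (a <= H i)%MS ->
  a *m PM j = if j == i then a else 0.
Proof.
move=> hi hj ha; case: eqVneq => [->|hne]; first exact: P_id.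
by apply: (@P_0 _ i) => //; rewrite eq_sym.
Qed.

Lemma projHE p (v : 'rV[F]_d) : projH V1 w p v = v *m PM p.
Proof. by rewrite PME. Qed.

Definition Mzero t := \sum_(p < w) PM p *m diag_mx t *m PM p.
Definition Mplus t := \sum_(p < w | (p.+1 < w)%N) PM p *m diag_mx t *m PM p.+1.
Definition Mminus t := \sum_(p < w | (0 < p)%N) PM p *m diag_mx t *m PM p.-1.

Lemma Dzero_mx t v : Dzero V1 w t v = v *m Mzero t.
Proof.
rewrite /Dzero /Mzero mulmx_sumr; apply: eq_bigr => p _.
by rewrite !projHE /Dmul pmul_mx !mulmxA.
Qed.
Lemma Dplus_mx t v : Dplus V1 w t v = v *m Mplus t.
Proof.
rewrite /Dplus /Mplus mulmx_sumr; apply: eq_bigr => p _.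
by rewrite !projHE /Dmul pmul_mx !mulmxA.
Qed.
Lemma Dminus_mx t v : Dminus V1 w t v = v *m Mminus t.
Proof.
rewrite /Dminus /Mminus mulmx_sumr; apply: eq_bigr => p _.
by rewrite !projHE /Dmul pmul_mx !mulmxA.
Qed.
Lemma Dmul_mx (t v : 'rV[F]_d) : Dmul t v = v *m diag_mx t.
Proof. exact: pmul_mx. Qed.

Lemma sum_single n (P : pred 'I_n) (f : 'I_n -> 'rV[F]_d) (q : 'I_n) :
  (forall p, p != q -> f p = 0) -> \sum_(p | P p) f p = if P q then f q else 0.
Proof.
move=> h; case: ifP => Pq.
  by rewrite (bigD1 q) //= big1 ?addr0 // => p /andP [_ hne]; apply: h.
apply: big1 => p Pp; apply: h; apply/eqP => e; by rewrite e Pq in Pp.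
Qed.

Section Graded.
Variables (t : 'rV[F]_d) (q : nat) (x : 'rV[F]_d).
Hypotheses (ht : (t <= V1)%MS) (hq : (q < w)%N) (hx : (x <= H q)%MS).

Lemma xPM (p : 'I_w) : p != Ordinal hq -> x *m PM p = 0.
Proof.
move=> hne; apply: (@P_0 _ q).
- exact: ltnW (ltn_ord p).
- exact: ltnW.
- by apply: contra hne => /eqP e; apply/eqP; apply: val_inj.
- exact: hx.
Qed.

Lemma Dzero_x : Dzero V1 w t x = x *m diag_mx t *m PM q.
Proof.
rewrite Dzero_mx /Mzero mulmx_sumr (sum_single _ (q:=Ordinal hq)) /=.
  by rewrite !mulmxA (@P_id _ x) //; exact: ltnW.
by move=> p hp; rewrite !mulmxA xPM // !mul0mx.
Qed.

Lemma Dplus_x : Dplus V1 w t x =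
  if (q.+1 < w)%N then x *m diag_mx t *m PM q.+1 else 0.
Proof.
rewrite Dplus_mx /Mplus mulmx_sumr (sum_single _ (q:=Ordinal hq)) /=.
  by rewrite !mulmxA (@P_id _ x) //; exact: ltnW.
by move=> p hp; rewrite !mulmxA xPM // !mul0mx.
Qed.

Lemma Dminus_x : Dminus V1 w t x =
  if (0 < q)%N then x *m diag_mx t *m PM q.-1 else 0.
Proof.
rewrite Dminus_mx /Mminus mulmx_sumr (sum_single _ (q:=Ordinal hq)) /=.
  by rewrite !mulmxA (@P_id _ x) //; exact: ltnW.
by move=> p hp; rewrite !mulmxA xPM // !mul0mx.
Qed.

Lemma ifmul (b : bool) (u : 'rV[F]_d) (M : 'M[F]_d) :
  (if b then u else 0) *m M = if b then u *m M else 0.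
Proof. by case: b; rewrite ?mul0mx. Qed.

Lemma Dmul_x : Dmul t x = Dminus V1 w t x + Dzero V1 w t x + Dplus V1 w t x.
Proof.
rewrite Dmul_mx Dminus_x Dzero_x Dplus_x; set y := x *m diag_mx t.
apply/eqP; rewrite -subr_eq0; apply/eqP.
rewrite [LHS]decomp; apply: big1 => j _; have hj : (j <= w)%N := ltn_ord j.
rewrite mulmxBl !mulmxDl !ifmul !(Pgr _ hj (P_sub _ _)); try lia.
case: (ltngtP j q) => hjq.
- have -> : ((j:nat) == q.+1) = false by lia.
  case: (eqVneq (j : nat) q.-1) => [e|ne].
    have -> : (0 < q)%N by lia.
    by rewrite e ?eqxx !if_same !addr0 subrr.
  rewrite !if_same !addr0 subr0; apply: (van_lo hq _ hx ht); lia.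
- have -> : ((j:nat) == q.-1) = false by lia.
  case: (eqVneq (j : nat) q.+1) => [e|ne].
    case: (ltnP q.+1 w) => hw.
      by rewrite e ?eqxx !if_same !add0r subrr.
    rewrite !if_same !addr0 subr0; apply: (van_hi hq hj _ hx ht); lia.
  rewrite !if_same !addr0 subr0; apply: (van_hi hq hj _ hx ht); lia.
- rewrite hjq ?eqxx.
  have -> : (q == q.+1) = false by lia.
  case: (posnP q) => [q0|qp].
    by rewrite q0 /= !if_same !add0r !addr0 subrr.
  have -> : (q == q.-1) = false by lia.
  by rewrite !if_same !add0r !addr0 subrr.
Qed.

End Graded.

Definition G n : 'M[F]_d := if (1 < n)%N && (n < w.+2)%N then H (n - 2) else 0.
Definition ZM n : 'M[F]_d := if (1 < n)%N && (n < w.+2)%N then PM (n - 2) else 0.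

Lemma projZ_G (a : 'rV[F]_d) i : (a <= G i)%MS -> forall m,
  a *m ZM m = if i == m then a else 0.
Proof.
move=> + m; rewrite /G /ZM; case: ifP => ci; last first.
  by rewrite submx0 => /eqP ->; rewrite mul0mx; case: (i == m).
case: ifP => cm ha.
  rewrite (@Pgr (i - 2)%N (m - 2)%N) //; try lia.
  by have -> : ((m - 2)%N == (i - 2)%N) = (i == m) by lia.
rewrite mulmx0; have -> : (i == m) = false; last by [].
by apply/negbTE; apply/negP => /eqP e; rewrite -e ci in cm.
Qed.

Lemma G0 n (a : 'rV[F]_d) : (a <= G n)%MS ->
  ~~ ((1 < n)%N && (n < w.+2)%N) -> a = 0.
Proof. by rewrite /G => + /negbTE c; rewrite c submx0 => /eqP. Qed.

Lemma DzeroG t n a : (t <= V1)%MS -> (a <= G n)%MS -> (Dzero V1 w t a <= G n)%MS.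
Proof.
move=> ht ha; case c : ((1 < n)%N && (n < w.+2)%N); last first.
  by rewrite (G0 ha) ?c // Dzero_mx mul0mx sub0mx.
have hq : (n - 2 < w)%N by lia.
move: ha; rewrite /G c => ha; rewrite (Dzero_x t hq ha); exact: P_sub.
Qed.

Lemma DplusG t n a : (t <= V1)%MS -> (a <= G n)%MS -> (Dplus V1 w t a <= G n.+1)%MS.
Proof.
move=> ht ha; case c : ((1 < n)%N && (n < w.+2)%N); last first.
  by rewrite (G0 ha) ?c // Dplus_mx mul0mx sub0mx.
have hq : (n - 2 < w)%N by lia.
move: ha; rewrite /G c => ha; rewrite (Dplus_x t hq ha).
case: ifP => h2; last exact: sub0mx.
have -> : ((1 < n.+1)%N && (n.+1 < w.+2)%N) = true by lia.
have -> : (n.+1 - 2 = (n - 2).+1)%N by lia.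
exact: P_sub.
Qed.

Lemma DminusG t n a : (t <= V1)%MS -> (a <= G n)%MS -> (Dminus V1 w t a <= G n.-1)%MS.
Proof.
move=> ht ha; case c : ((1 < n)%N && (n < w.+2)%N); last first.
  by rewrite (G0 ha) ?c // Dminus_mx mul0mx sub0mx.
have hq : (n - 2 < w)%N by lia.
move: ha; rewrite /G c => ha; rewrite (Dminus_x t hq ha).
case: ifP => h2; last exact: sub0mx.
have -> : ((1 < n.-1)%N && (n.-1 < w.+2)%N) = true by lia.
have -> : (n.-1 - 2 = (n - 2).-1)%N by lia.
exact: P_sub.
Qed.

Lemma DmulG t n a : (t <= V1)%MS -> (a <= G n)%MS ->
  Dmul t a = Dminus V1 w t a + Dzero V1 w t a + Dplus V1 w t a.
Proof.
move=> ht ha; case c : ((1 < n)%N && (n < w.+2)%N); last first.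
  by rewrite (G0 ha) ?c // Dmul_mx Dminus_mx Dzero_mx Dplus_mx !mul0mx !addr0.
have hq : (n - 2 < w)%N by lia.
move: ha; rewrite /G c => ha; exact: (Dmul_x ht hq ha).
Qed.

Lemma DmulD (t u v : 'rV[F]_d) : Dmul t (u + v) = Dmul t u + Dmul t v.
Proof. by rewrite !Dmul_mx mulmxDl. Qed.

Lemma Dmul_comm (t t' v : 'rV[F]_d) : Dmul t (Dmul t' v) = Dmul t' (Dmul t v).
Proof. by apply/rowP => k; rewrite /Dmul !mxE mulrCA. Qed.

Lemma entry_trick (X Y L R : 'rV[F]_d) : X = Y ->
  (forall k, L 0 k - R 0 k = X 0 k - Y 0 k) -> L = R.
Proof.
move=> e h; apply/rowP => k; apply/eqP; rewrite -subr_eq0 h e subrr //.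
Qed.

Lemma graded_ids t t' q x : (t <= V1)%MS -> (t' <= V1)%MS -> (q < w)%N ->
  (x <= H q)%MS ->
  [/\ Dplus V1 w t (Dplus V1 w t' x) = Dplus V1 w t' (Dplus V1 w t x),
       Dminus V1 w t (Dminus V1 w t' x) = Dminus V1 w t' (Dminus V1 w t x),
       Dzero V1 w t (Dplus V1 w t' x) + Dplus V1 w t (Dzero V1 w t' x)
          = Dzero V1 w t' (Dplus V1 w t x) + Dplus V1 w t' (Dzero V1 w t x),
       Dzero V1 w t (Dminus V1 w t' x) + Dminus V1 w t (Dzero V1 w t' x)
          = Dzero V1 w t' (Dminus V1 w t x) + Dminus V1 w t' (Dzero V1 w t x)
     & Dzero V1 w t (Dzero V1 w t' x) - Dzero V1 w t' (Dzero V1 w t x)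
        + Dplus V1 w t (Dminus V1 w t' x) - Dplus V1 w t' (Dminus V1 w t x)
        + Dminus V1 w t (Dplus V1 w t' x) - Dminus V1 w t' (Dplus V1 w t x) = 0].
Proof.
move=> ht htq hq hx.
have hx2 : (x <= G (2 + q))%MS.
  rewrite /G; have -> : ((1 < 2 + q) && (2 + q < w.+2))%N = true by lia.
  by have -> : (2 + q - 2 = q)%N by lia.
have hmq : (Dminus V1 w t' x <= G (1 + q))%MS := DminusG htq hx2.
have hzq : (Dzero V1 w t' x <= G (2 + q))%MS := DzeroG htq hx2.
have hpq : (Dplus V1 w t' x <= G (3 + q))%MS := DplusG htq hx2.
have hm : (Dminus V1 w t x <= G (1 + q))%MS := DminusG ht hx2.
have hz : (Dzero V1 w t x <= G (2 + q))%MS := DzeroG ht hx2.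
have hp : (Dplus V1 w t x <= G (3 + q))%MS := DplusG ht hx2.
have gtmm : (Dminus V1 w t (Dminus V1 w t' x) <= G (0 + q))%MS := DminusG ht hmq.
have gtzm : (Dzero V1 w t (Dminus V1 w t' x) <= G (1 + q))%MS := DzeroG ht hmq.
have gtpm : (Dplus V1 w t (Dminus V1 w t' x) <= G (2 + q))%MS := DplusG ht hmq.
have gtmz : (Dminus V1 w t (Dzero V1 w t' x) <= G (1 + q))%MS := DminusG ht hzq.
have gtzz : (Dzero V1 w t (Dzero V1 w t' x) <= G (2 + q))%MS := DzeroG ht hzq.
have gtpz : (Dplus V1 w t (Dzero V1 w t' x) <= G (3 + q))%MS := DplusG ht hzq.
have gtmp : (Dminus V1 w t (Dplus V1 w t' x) <= G (2 + q))%MS := DminusG ht hpq.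
have gtzp : (Dzero V1 w t (Dplus V1 w t' x) <= G (3 + q))%MS := DzeroG ht hpq.
have gtpp : (Dplus V1 w t (Dplus V1 w t' x) <= G (4 + q))%MS := DplusG ht hpq.
have gqmm : (Dminus V1 w t' (Dminus V1 w t x) <= G (0 + q))%MS := DminusG htq hm.
have gqzm : (Dzero V1 w t' (Dminus V1 w t x) <= G (1 + q))%MS := DzeroG htq hm.
have gqpm : (Dplus V1 w t' (Dminus V1 w t x) <= G (2 + q))%MS := DplusG htq hm.
have gqmz : (Dminus V1 w t' (Dzero V1 w t x) <= G (1 + q))%MS := DminusG htq hz.
have gqzz : (Dzero V1 w t' (Dzero V1 w t x) <= G (2 + q))%MS := DzeroG htq hz.
have gqpz : (Dplus V1 w t' (Dzero V1 w t x) <= G (3 + q))%MS := DplusG htq hz.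
have gqmp : (Dminus V1 w t' (Dplus V1 w t x) <= G (2 + q))%MS := DminusG htq hp.
have gqzp : (Dzero V1 w t' (Dplus V1 w t x) <= G (3 + q))%MS := DzeroG htq hp.
have gqpp : (Dplus V1 w t' (Dplus V1 w t x) <= G (4 + q))%MS := DplusG htq hp.
have E := Dmul_comm t t' x.
rewrite (DmulG htq hx2) (DmulG ht hx2) !DmulD (DmulG ht hmq) (DmulG ht hzq) (DmulG ht hpq) in E.
rewrite (DmulG htq hm) (DmulG htq hz) (DmulG htq hp) in E.
move: E gtmm gtzm gtpm gtmz gtzz gtpz gtmp gtzp gtpp gqmm gqzm gqpm gqmz gqzz gqpz gqmp gqzp gqpp.
move: (Dminus V1 w t (Dminus V1 w t' x)) => T0.
move: (Dzero V1 w t (Dminus V1 w t' x)) => T1.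
move: (Dplus V1 w t (Dminus V1 w t' x)) => T2.
move: (Dminus V1 w t (Dzero V1 w t' x)) => T3.
move: (Dzero V1 w t (Dzero V1 w t' x)) => T4.
move: (Dplus V1 w t (Dzero V1 w t' x)) => T5.
move: (Dminus V1 w t (Dplus V1 w t' x)) => T6.
move: (Dzero V1 w t (Dplus V1 w t' x)) => T7.
move: (Dplus V1 w t (Dplus V1 w t' x)) => T8.
move: (Dminus V1 w t' (Dminus V1 w t x)) => T9.
move: (Dzero V1 w t' (Dminus V1 w t x)) => T10.
move: (Dplus V1 w t' (Dminus V1 w t x)) => T11.
move: (Dminus V1 w t' (Dzero V1 w t x)) => T12.
move: (Dzero V1 w t' (Dzero V1 w t x)) => T13.
move: (Dplus V1 w t' (Dzero V1 w t x)) => T14.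
move: (Dminus V1 w t' (Dplus V1 w t x)) => T15.
move: (Dzero V1 w t' (Dplus V1 w t x)) => T16.
move: (Dplus V1 w t' (Dplus V1 w t x)) => T17.
move=> E gtmm gtzm gtpm gtmz gtzz gtpz gtmp gtzp gtpp gqmm gqzm gqpm gqmz gqzz gqpz gqmp gqzp gqpp.
have P := fun m => congr1 (fun v => v *m ZM (m + q)) E.
have P0 := P 0%N; have P1 := P 1%N; have P2 := P 2%N; have P3 := P 3%N; have P4 := P 4%N.
clear P.
rewrite !mulmxDl !(projZ_G gtmm) !(projZ_G gtzm) !(projZ_G gtpm) !(projZ_G gtmz) !(projZ_G gtzz) !(projZ_G gtpz) !(projZ_G gtmp) !(projZ_G gtzp) !(projZ_G gtpp) !(projZ_G gqmm) !(projZ_G gqzm) !(projZ_G gqpm) !(projZ_G gqmz) !(projZ_G gqzz) !(projZ_G gqpz) !(projZ_G gqmp) !(projZ_G gqzp) !(projZ_G gqpp) !eqn_add2r /= in P0.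
rewrite !mulmxDl !(projZ_G gtmm) !(projZ_G gtzm) !(projZ_G gtpm) !(projZ_G gtmz) !(projZ_G gtzz) !(projZ_G gtpz) !(projZ_G gtmp) !(projZ_G gtzp) !(projZ_G gtpp) !(projZ_G gqmm) !(projZ_G gqzm) !(projZ_G gqpm) !(projZ_G gqmz) !(projZ_G gqzz) !(projZ_G gqpz) !(projZ_G gqmp) !(projZ_G gqzp) !(projZ_G gqpp) !eqn_add2r /= in P1.
rewrite !mulmxDl !(projZ_G gtmm) !(projZ_G gtzm) !(projZ_G gtpm) !(projZ_G gtmz) !(projZ_G gtzz) !(projZ_G gtpz) !(projZ_G gtmp) !(projZ_G gtzp) !(projZ_G gtpp) !(projZ_G gqmm) !(projZ_G gqzm) !(projZ_G gqpm) !(projZ_G gqmz) !(projZ_G gqzz) !(projZ_G gqpz) !(projZ_G gqmp) !(projZ_G gqzp) !(projZ_G gqpp) !eqn_add2r /= in P2.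
rewrite !mulmxDl !(projZ_G gtmm) !(projZ_G gtzm) !(projZ_G gtpm) !(projZ_G gtmz) !(projZ_G gtzz) !(projZ_G gtpz) !(projZ_G gtmp) !(projZ_G gtzp) !(projZ_G gtpp) !(projZ_G gqmm) !(projZ_G gqzm) !(projZ_G gqpm) !(projZ_G gqmz) !(projZ_G gqzz) !(projZ_G gqpz) !(projZ_G gqmp) !(projZ_G gqzp) !(projZ_G gqpp) !eqn_add2r /= in P3.
rewrite !mulmxDl !(projZ_G gtmm) !(projZ_G gtzm) !(projZ_G gtpm) !(projZ_G gtmz) !(projZ_G gtzz) !(projZ_G gtpz) !(projZ_G gtmp) !(projZ_G gtzp) !(projZ_G gtpp) !(projZ_G gqmm) !(projZ_G gqzm) !(projZ_G gqpm) !(projZ_G gqmz) !(projZ_G gqzz) !(projZ_G gqpz) !(projZ_G gqmp) !(projZ_G gqzp) !(projZ_G gqpp) !eqn_add2r /= in P4.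
split.
- by apply: (entry_trick P4) => k; rewrite !mxE; ring.
- by apply: (entry_trick P0) => k; rewrite !mxE; ring.
- by apply: (entry_trick P3) => k; rewrite !mxE; ring.
- by apply: (entry_trick P1) => k; rewrite !mxE; ring.
- by apply: (entry_trick P2) => k; rewrite !mxE; ring.
Qed.


Lemma reduce (M : 'M[F]_d) (v : 'rV[F]_d) : (v <= V w)%MS ->
  (forall q (x : 'rV[F]_d), (q < w)%N -> (x <= H q)%MS -> x *m M = 0) ->
  v *m M = 0.
Proof.
move=> hv h; rewrite (decompV hv) mulmx_suml; apply: big1 => p _.
exact: h (ltn_ord p) (P_sub _ _).
Qed.

Lemma reduceE (M N : 'M[F]_d) (v : 'rV[F]_d) : (v <= V w)%MS ->
  (forall q (x : 'rV[F]_d), (q < w)%N -> (x <= H q)%MS -> x *m M = x *m N) ->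
  v *m M = v *m N.
Proof.
move=> hv h; apply/eqP; rewrite -subr_eq0 -mulmxBr; apply/eqP.
by apply: (reduce hv) => q x hq hx; rewrite mulmxBr (h q x hq hx) subrr.
Qed.

Lemma main_inner :
  forall t t' : 'rV[F]_d, (t <= Hp V1 w 0)%MS -> (t' <= Hp V1 w 0)%MS ->
  (forall v, (v <= Vk V1 w)%MS ->
     Dmul t v = Dminus V1 w t v + Dzero V1 w t v + Dplus V1 w t v)
  /\ (forall p : nat, (p < w)%N -> forall x, (x <= Hp V1 w p)%MS ->
        [/\ (Dzero V1 w t x <= Hp V1 w p)%MS,
            (Dplus V1 w t x <= (if (p.+1 < w)%N then Hp V1 w p.+1 else 0))%MS
          & (Dminus V1 w t x <= (if (0 < p)%N then Hp V1 w p.-1 else 0))%MS])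
  /\ (forall v, (v <= Vk V1 w)%MS ->
        Dplus V1 w t (Dplus V1 w t' v) = Dplus V1 w t' (Dplus V1 w t v)
        /\ Dminus V1 w t (Dminus V1 w t' v) = Dminus V1 w t' (Dminus V1 w t v))
  /\ (forall v, (v <= Vk V1 w)%MS ->
        Dzero V1 w t (Dplus V1 w t' v) + Dplus V1 w t (Dzero V1 w t' v)
          = Dzero V1 w t' (Dplus V1 w t v) + Dplus V1 w t' (Dzero V1 w t v)
        /\ Dzero V1 w t (Dminus V1 w t' v) + Dminus V1 w t (Dzero V1 w t' v)
          = Dzero V1 w t' (Dminus V1 w t v) + Dminus V1 w t' (Dzero V1 w t v))
  /\ (forall v, (v <= Vk V1 w)%MS ->
        Dzero V1 w t (Dzero V1 w t' v) - Dzero V1 w t' (Dzero V1 w t v)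
        + Dplus V1 w t (Dminus V1 w t' v) - Dplus V1 w t' (Dminus V1 w t v)
        + Dminus V1 w t (Dplus V1 w t' v) - Dminus V1 w t' (Dplus V1 w t v) = 0).
Proof.
move=> t t' ht0 ht0'.
have ht : (t <= V1)%MS by exact: submx_trans ht0 (H_sub_V hw1).
have htq : (t' <= V1)%MS by exact: submx_trans ht0' (H_sub_V hw1).
split; [|split; [|split; [|split]]].
- move=> v hv; rewrite Dmul_mx Dminus_mx Dzero_mx Dplus_mx -!mulmxDr.
  apply: (reduceE hv) => q x hq hx.
  rewrite !mulmxDr -Dmul_mx -Dminus_mx -Dzero_mx -Dplus_mx.
  exact: (Dmul_x ht hq hx).
- move=> p hp x hx.
  rewrite (Dzero_x t hp hx) (Dplus_x t hp hx) (Dminus_x t hp hx).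
  split; first exact: P_sub.
    by case: ifP => _; rewrite ?P_sub ?sub0mx.
  by case: ifP => _; rewrite ?P_sub ?sub0mx.
- move=> v hv; split.
    rewrite !Dplus_mx -!mulmxA; apply: (reduceE hv) => q x hq hx.
    by rewrite !mulmxA -!Dplus_mx; case: (graded_ids ht htq hq hx).
  rewrite !Dminus_mx -!mulmxA; apply: (reduceE hv) => q x hq hx.
  by rewrite !mulmxA -!Dminus_mx; case: (graded_ids ht htq hq hx).
- move=> v hv; split.
    rewrite !Dzero_mx !Dplus_mx -!mulmxA -!mulmxDr; apply: (reduceE hv) => q x hq hx.
    by rewrite !mulmxDr !mulmxA -!Dzero_mx -!Dplus_mx; case: (graded_ids ht htq hq hx).
  rewrite !Dzero_mx !Dminus_mx -!mulmxA -!mulmxDr; apply: (reduceE hv) => q x hq hx.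
  by rewrite !mulmxDr !mulmxA -!Dzero_mx -!Dminus_mx; case: (graded_ids ht htq hq hx).
- move=> v hv.
  rewrite !Dzero_mx !Dplus_mx !Dminus_mx -!mulmxA -!mulmxN -!mulmxDr.
  apply: (reduce hv) => q x hq hx.
  rewrite !mulmxDr !mulmxN !mulmxA -!Dzero_mx -!Dplus_mx -!Dminus_mx.
  by case: (graded_ids ht htq hq hx).
Qed.

End Main.

Unset Implicit Arguments.

Theorem theorem0p3 (F : fieldType) (d : nat) (V1 : 'M[F]_d) (w : nat)
  (* 1 ∈ V_1 *)
  (h1 : (oneZ F d <= V1)%MS)
  (* polarizing: q|_{V_k} non-degenerate for all k >= 1 *)
  (hpol : forall k, (1 <= k)%N -> nondeg (Vk V1 k))
  (* w is the least integer >= 1 with V_k = V_w for all k >= w *)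
  (hw1 : (1 <= w)%N)
  (hstab : forall k, (w <= k)%N -> (Vk V1 k == Vk V1 w)%MS)
  (hmin : forall w', (1 <= w')%N ->
            (forall k, (w' <= k)%N -> (Vk V1 k == Vk V1 w')%MS) -> (w <= w')%N) :
  forall t t' : 'rV[F]_d, (t <= Hp V1 w 0)%MS -> (t' <= Hp V1 w 0)%MS ->
  (* D = D^- + D^0 + D^+ on V_w *)
  (forall v, (v <= Vk V1 w)%MS ->
     Dmul t v = Dminus V1 w t v + Dzero V1 w t v + Dplus V1 w t v)
  (* D^0 preserves the grading, D^± shift it by ±1 *)
  /\ (forall p : nat, (p < w)%N -> forall x, (x <= Hp V1 w p)%MS ->
        [/\ (Dzero V1 w t x <= Hp V1 w p)%MS,
            (Dplus V1 w t x <= (if (p.+1 < w)%N then Hp V1 w p.+1 else 0))%MS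
          & (Dminus V1 w t x <= (if (0 < p)%N then Hp V1 w p.-1 else 0))%MS])
  (* (i) *)
  /\ (forall v, (v <= Vk V1 w)%MS ->
        Dplus V1 w t (Dplus V1 w t' v) = Dplus V1 w t' (Dplus V1 w t v)
        /\ Dminus V1 w t (Dminus V1 w t' v) = Dminus V1 w t' (Dminus V1 w t v))
  (* (ii) *)
  /\ (forall v, (v <= Vk V1 w)%MS ->
        Dzero V1 w t (Dplus V1 w t' v) + Dplus V1 w t (Dzero V1 w t' v)
          = Dzero V1 w t' (Dplus V1 w t v) + Dplus V1 w t' (Dzero V1 w t v)
        /\ Dzero V1 w t (Dminus V1 w t' v) + Dminus V1 w t (Dzero V1 w t' v)
          = Dzero V1 w t' (Dminus V1 w t v) + Dminus V1 w t' (Dzero V1 w t v))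
  (* (iii) *)
  /\ (forall v, (v <= Vk V1 w)%MS ->
        Dzero V1 w t (Dzero V1 w t' v) - Dzero V1 w t' (Dzero V1 w t v)
        + Dplus V1 w t (Dminus V1 w t' v) - Dplus V1 w t' (Dminus V1 w t v)
        + Dminus V1 w t (Dplus V1 w t' v) - Dminus V1 w t' (Dplus V1 w t v) = 0).
Proof.
exact: (main_inner h1 hpol hw1 hstab).
Qed.
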